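(* The ballean $(\omega,\mathfrak{M}_\omega)$ does not have bounded growth.
   Context: A ballean $(X,\mathcal{E})$ is a set with a coarse structure. $E[x]=\{y:(x,y)\in E\}$. $Y$ is bounded if $Y\subseteq E[x]$ for some $x$ and $E\in\mathcal{E}$; $\mathcal{B}_X$ is the family of bounded sets. $(X,\mathcal{E})$ has bounded growth if there is a map $f:X\to\mathcal{B}_X$ such that $\bigcup_{x\in B}f(x)\in\mathcal{B}_X$ for every $B\in\mathcal{B}_X$, and for every $E\in\mathcal{E}$ there is $C\in\mathcal{B}_X$ with $E[x]\subseteq f(x)$ for all $x\in X\setminus C$. $\mathfrak{M}_\omega$ is the coarse structure on $\omega$ with base $\{M_{\mathcal{P}}\}$, where $\mathcal{P}$ ranges over coverings of $\omega$ by finite sets such that for each $x\in\omega$ the set $\bigcup\{P'\in\mathcal{P}:x\in P'\}$ is finite, and $M_{\mathcal{P}}=\{(x,y):x,y\in P\text{ for some }P\in\mathcal{P}\}$; its bounded sets are the finite subsets of $\omega$. *)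

(* Defs.v *)
From Stdlib Require Import List.

Definition ball {X : Type} (E : X -> X -> Prop) (x : X) : X -> Prop :=
  fun y => E x y.

Definition bounded {X : Type} (calE : (X -> X -> Prop) -> Prop)
  (Y : X -> Prop) : Prop :=
  exists (x : X) (E : X -> X -> Prop), calE E /\ forall y, Y y -> ball E x y.

Definition bounded_growth {X : Type} (calE : (X -> X -> Prop) -> Prop) : Prop :=
  exists f : X -> (X -> Prop),
    (forall x, bounded calE (f x)) /\
    (forall B, bounded calE B ->
       bounded calE (fun y => exists x, B x /\ f x y)) /\
    (forall E, calE E ->
       exists C, bounded calE C /\
         forall x, ~ C x -> forall y, ball E x y -> f x y).

Definition finite_set (S : nat -> Prop) : Prop :=
  exists l : list nat, forall y, S y -> In y l.

Definition admissible_cover (P : (nat -> Prop) -> Prop) : Prop :=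
  (forall A, P A -> finite_set A) /\
  (forall x, exists A, P A /\ A x) /\
  (forall x, finite_set (fun y => exists A, P A /\ A x /\ A y)).

Definition M_of (P : (nat -> Prop) -> Prop) (x y : nat) : Prop :=
  exists A, P A /\ A x /\ A y.

Definition M_omega (E : nat -> nat -> Prop) : Prop :=
  exists P, admissible_cover P /\ forall x y, E x y -> M_of P x y.

(* Main.v *)
Require Import Defs.
From Stdlib Require Import List Lia IndefiniteDescription.

Lemma fin_bound (Q : nat -> Prop) : finite_set Q -> exists n, forall y, Q y -> y < n.
Proof.
  intros [l Hl]. exists (S (list_max l)). intros y Hy.
  assert (H := proj1 (list_max_le l (list_max l)) (le_n _)).
  rewrite Forall_forall in H. specialize (H y (Hl y Hy)). lia.
Qed.

Lemma bnd_bound (Y : nat -> Prop) : bounded M_omega Y -> exists n, forall y, Y y -> y < n.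
Proof.
  intros [z [E [[P [[_ [_ H3]] HE]] HY]]].
  destruct (fin_bound _ (H3 z)) as [n Hn]. exists n. intros y Hy.
  apply Hn. apply HE. apply HY. exact Hy.
Qed.

Theorem mainTheorem12 : ~ bounded_growth M_omega.
Proof.
  intros [f [Hf [_ HE]]].
  assert (Hg : forall x, {n | forall y, f x y -> y < n}).
  { intro x. apply constructive_indefinite_description. apply bnd_bound, Hf. }
  set (h := fun x => x + proj1_sig (Hg x)).
  set (P := fun A : nat -> Prop => exists x, forall y, A y <-> (y = x \/ y = h x)).
  assert (HM : M_omega (M_of P)).
  { exists P. split; [|auto]. split; [|split].
    - intros A [x Hx]. exists (x :: h x :: nil). intros y Hy.
      apply Hx in Hy. simpl. destruct Hy; subst; auto.
    - intro x. exists (fun y => y = x \/ y = h x). split.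
      + exists x. tauto.
      + auto.
    - intro x. exists (h x :: seq 0 (S x)). intros y [A [[z Hz] [Ax Ay]]].
      apply Hz in Ax. apply Hz in Ay.
      destruct Ax as [-> | ->].
      + destruct Ay as [-> | ->]; [right; apply in_seq; lia | left; auto].
      + destruct Ay as [-> | ->]; right; apply in_seq; unfold h in *; lia. }
  destruct (HE _ HM) as [C [HC HCx]].
  destruct (bnd_bound _ HC) as [n Hn].
  assert (HnC : ~ C n) by (intro H; specialize (Hn n H); lia).
  assert (Hb : ball (M_of P) n (h n)).
  { exists (fun y => y = n \/ y = h n). split; [exists n; tauto | auto]. }
  specialize (HCx n HnC (h n) Hb).
  pose proof (proj2_sig (Hg n) _ HCx) as Hm. unfold h in Hm. lia.
Qed.
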